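(* Let $X=Y=\mathbb Z$ with $d(n,m)=|n-m|$, and let $f_1=\mathrm{id}_{\mathbb Z}$, $f_2(n)=-n$. Then there is no metric $d\in D(\mathbb Z,\mathbb Z)$ with $M_{d_{f_1}}(\mathbb Z,\mathbb Z)\subset M_d(\mathbb Z,\mathbb Z)$ and $M_{d_{f_2}}(\mathbb Z,\mathbb Z)\subset M_d(\mathbb Z,\mathbb Z)$; in particular the preorder $\preceq$ on $D(\mathbb Z,\mathbb Z)$ is not upwards directed.
   Context: $D(X,Y)$: metrics on $X\sqcup Y$ extending $d_X,d_Y$. $M_d(X,Y)$: norm closure of bounded operators $T:l^2(X)\to l^2(Y)$ with finite propagation (there is $L$ with $\langle T\delta_x,\delta_y\rangle=0$ whenever $d(x,y)\ge L$). $d\preceq d'$ means $M_d\subset M_{d'}$. For an almost isometry $f:X\to Y$ (i.e. $d_X(x,x')-C\le d_Y(f(x),f(x'))\le d_X(x,x')+C$ for some $C>0$), $d_f$ is the metric extending $d_X,d_Y$ with $d_f(x,y)=\inf_{\tilde x\in X}(d_X(x,\tilde x)+C/2+d_Y(f(\tilde x),y))$. *)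

(* Defs.v *)
From Stdlib Require Import Reals ZArith List Classical ClassicalEpsilon.
Open Scope R_scope.

Definition C := (R * R)%type.
Definition C0 : C := (0, 0).
Definition Cadd (a b : C) : C := (fst a + fst b, snd a + snd b).
Definition Copp (a : C) : C := (- fst a, - snd a).
Definition Cmul (a b : C) : C :=
  (fst a * fst b - snd a * snd b, fst a * snd b + snd a * fst b).
Definition Cnorm2 (a : C) : R := fst a * fst a + snd a * snd a.

Definition Csum (f : Z -> C) (l : list Z) : C :=
  fold_right (fun x acc => Cadd (f x) acc) C0 l.
Definition Rsum (f : Z -> R) (l : list Z) : R :=
  fold_right (fun x acc => f x + acc) 0 l.

(* ---------- operators l^2(Z) -> l^2(Z) via matrix entries ----------
   A kernel k represents the operator T with  k x y = <T delta_x, delta_y>,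
   x in X = Z (domain), y in Y = Z (codomain); so (T v)_y = sum_x k x y v_x.
   [op_norm_le k c] says: T is bounded with operator norm <= c, tested on all
   finitely supported vectors v (support in the duplicate-free list xs) and
   all finite sets ys of output coordinates. *)
Definition kernel := Z -> Z -> C.

Definition op_norm_le (k : kernel) (c : R) : Prop :=
  0 <= c /\
  forall (xs ys : list Z) (v : Z -> C), NoDup xs -> NoDup ys ->
    Rsum (fun y => Cnorm2 (Csum (fun x => Cmul (k x y) (v x)) xs)) ys
    <= c * c * Rsum (fun x => Cnorm2 (v x)) xs.

Definition bounded_op (k : kernel) : Prop := exists c, op_norm_le k c.

Definition ksub (k s : kernel) : kernel := fun x y => Cadd (k x y) (Copp (s x y)).

Definition ZZ := (Z + Z)%type.

Definition is_metric (d : ZZ -> ZZ -> R) : Prop :=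
  (forall p q, 0 <= d p q) /\
  (forall p q, d p q = 0 <-> p = q) /\
  (forall p q, d p q = d q p) /\
  (forall p q r, d p r <= d p q + d q r).

Definition inD (d : ZZ -> ZZ -> R) : Prop :=
  is_metric d /\
  (forall a b, d (inl a) (inl b) = Rabs (IZR (a - b))) /\
  (forall a b, d (inr a) (inr b) = Rabs (IZR (a - b))).

Definition finite_prop (d : ZZ -> ZZ -> R) (k : kernel) : Prop :=
  exists L, forall x y, L <= d (inl x) (inr y) -> k x y = C0.

Definition inM (d : ZZ -> ZZ -> R) (k : kernel) : Prop :=
  bounded_op k /\
  forall eps, 0 < eps ->
    exists s, bounded_op s /\ finite_prop d s /\ op_norm_le (ksub k s) eps.

Definition preceq (d d' : ZZ -> ZZ -> R) : Prop :=
  forall k, inM d k -> inM d' k.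

(* ---------- infimum of a set of reals (0 if it has none) ---------- *)
Definition is_inf (E : R -> Prop) (m : R) : Prop :=
  (forall x, E x -> m <= x) /\
  (forall m', (forall x, E x -> m' <= x) -> m' <= m).

Definition Rinf (E : R -> Prop) : R :=
  match excluded_middle_informative (exists m, is_inf E m) with
  | left H => proj1_sig (constructive_indefinite_description _ H)
  | right _ => 0
  end.

Definition df_cross (f : Z -> Z) (Cf : R) (x y : Z) : R :=
  Rinf (fun r => exists t : Z,
          r = Rabs (IZR (x - t)) + Cf / 2 + Rabs (IZR (f t - y))).

Definition d_f (f : Z -> Z) (Cf : R) (p q : ZZ) : R :=
  match p, q with
  | inl a, inl b => Rabs (IZR (a - b))
  | inr a, inr b => Rabs (IZR (a - b))
  | inl x, inr y => df_cross f Cf x y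
  | inr y, inl x => df_cross f Cf x y
  end.

Definition almost_isometry (f : Z -> Z) (Cf : R) : Prop :=
  0 < Cf /\
  forall a b, Rabs (IZR (a - b)) - Cf <= Rabs (IZR (f a - f b)) <= Rabs (IZR (a - b)) + Cf.

Definition f1 (n : Z) : Z := n.
Definition f2 (n : Z) : Z := (- n)%Z.

(* Main.v *)
Require Import Defs.
From Stdlib Require Import Reals ZArith List Lra Lia ClassicalEpsilon.
Open Scope R_scope.

Definition kg (g : Z -> Z) : kernel :=
  fun x y => if Z.eq_dec y (g x) then (1, 0) else C0.

Lemma Cnorm2_nonneg a : 0 <= Cnorm2 a.
Proof. destruct a; unfold Cnorm2; simpl; nra. Qed.

Lemma Rsum_ext f h l : (forall y, f y = h y) -> Rsum f l = Rsum h l.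
Proof. intros H; induction l; simpl; auto. rewrite IHl, H; auto. Qed.

Lemma Rsum_nonneg f l : (forall y, 0 <= f y) -> 0 <= Rsum f l.
Proof. intros H; induction l; simpl. lra. specialize (H a). lra. Qed.

Lemma Rsum_zero l : Rsum (fun _ => 0) l = 0.
Proof. induction l; simpl; auto. rewrite IHl; ring. Qed.

Lemma Rsum_notin z a b ys : ~ In z ys ->
  Rsum (fun y => if Z.eq_dec y z then a else b y) ys = Rsum b ys.
Proof.
  induction ys as [|y ys IH]; simpl; intros Hn; auto.
  destruct (Z.eq_dec y z). exfalso; apply Hn; auto.
  rewrite IH; auto.
Qed.

Lemma Rsum_if z a b ys : NoDup ys -> 0 <= a -> (forall y, 0 <= b y) ->
  Rsum (fun y => if Z.eq_dec y z then a else b y) ys <= a + Rsum b ys.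
Proof.
  induction ys as [|y ys IH]; simpl; intros Hnd Ha Hb. lra.
  inversion Hnd as [|? ? Hn Hnd']; subst.
  destruct (Z.eq_dec y z).
  - subst. rewrite Rsum_notin; auto. specialize (Hb z); lra.
  - specialize (IH Hnd' Ha Hb). lra.
Qed.

Section G.
Variable g : Z -> Z.
Hypothesis ginj : forall a b, g a = g b -> a = b.
Variable v : Z -> Defs.C.

Lemma csum_zero y xs : (forall x, In x xs -> y <> g x) ->
  Csum (fun x => Cmul (kg g x y) (v x)) xs = C0.
Proof.
  induction xs as [|a xs IH]; simpl; intros H; auto.
  rewrite IH by (intros; apply H; auto).
  unfold kg; destruct (Z.eq_dec y (g a)).
  exfalso; apply (H a); auto.
  destruct (v a); unfold Cadd, Cmul, C0; simpl; f_equal; ring.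
Qed.

Fixpoint Fx (xs : list Z) (y : Z) : R :=
  match xs with
  | nil => 0
  | x0 :: xs' => if Z.eq_dec y (g x0) then Cnorm2 (v x0) else Fx xs' y
  end.

Lemma Fx_nonneg xs y : 0 <= Fx xs y.
Proof.
  induction xs; simpl. lra. destruct Z.eq_dec; auto. apply Cnorm2_nonneg.
Qed.

Lemma cn_csum xs y : NoDup xs ->
  Cnorm2 (Csum (fun x => Cmul (kg g x y) (v x)) xs) = Fx xs y.
Proof.
  induction xs as [|a xs IH]; intros Hnd.
  - simpl. unfold Cnorm2, C0; simpl; ring.
  - inversion Hnd as [|? ? Hn Hnd']; subst.
    simpl. destruct (Z.eq_dec y (g a)) as [e|ne].
    + rewrite csum_zero.
      * unfold kg. rewrite e. destruct (Z.eq_dec (g a) (g a)); [|congruence].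
        destruct (v a); unfold Cnorm2, Cadd, Cmul, C0; simpl; ring.
      * intros x Hx Heq. apply Hn. rewrite e in Heq. apply ginj in Heq.
        subst; auto.
    + rewrite <- IH by auto.
      unfold kg at 1. destruct (Z.eq_dec y (g a)); [congruence|].
      destruct (Csum _ xs), (v a); unfold Cnorm2, Cadd, Cmul, C0; simpl; ring.
Qed.

Lemma Fx_sum xs ys : NoDup xs -> NoDup ys ->
  Rsum (Fx xs) ys <= Rsum (fun x => Cnorm2 (v x)) xs.
Proof.
  induction xs as [|a xs IH]; intros Hx Hy.
  - simpl. rewrite Rsum_zero; lra.
  - inversion Hx; subst. simpl.
    eapply Rle_trans.
    + apply (Rsum_if (g a) (Cnorm2 (v a)) (Fx xs) ys Hy (Cnorm2_nonneg _) (Fx_nonneg xs)).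
    + specialize (IH H2 Hy). lra.
Qed.
End G.

Lemma kg_bounded g : (forall a b, g a = g b -> a = b) -> op_norm_le (kg g) 1.
Proof.
  intros ginj. split. lra. intros xs ys v Hx Hy.
  rewrite (Rsum_ext _ (Fx g v xs)) by (intros; apply cn_csum; auto).
  eapply Rle_trans. apply Fx_sum; auto. lra.
Qed.

Lemma ksub_self_zero k v y xs :
  Csum (fun x => Cmul (ksub k k x y) (v x)) xs = C0.
Proof.
  induction xs as [|a xs IH]; simpl; auto. rewrite IH.
  unfold ksub. destruct (k a y), (v a); unfold Cadd, Cmul, Copp, C0; simpl; f_equal; ring.
Qed.

Lemma inM_kg d g B : (forall a b, g a = g b -> a = b) ->
  (forall x, d (inl x) (inr (g x)) <= B) -> inM d (kg g).
Proof.
  intros ginj HB. split. exists 1; apply kg_bounded; auto.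
  intros eps Heps. exists (kg g). split. exists 1; apply kg_bounded; auto.
  split.
  - exists (B + 1). intros x y HL. unfold kg. destruct (Z.eq_dec y (g x)); auto.
    subst. specialize (HB x). lra.
  - split. lra. intros xs ys v _ _.
    rewrite (Rsum_ext _ (fun _ => 0)).
    + rewrite Rsum_zero. apply Rmult_le_pos. nra.
      apply Rsum_nonneg; intros; apply Cnorm2_nonneg.
    + intros y. rewrite ksub_self_zero. unfold Cnorm2, C0; simpl; ring.
Qed.

Lemma entry_bound m c x y : op_norm_le m c -> Cnorm2 (m x y) <= c * c.
Proof.
  intros [_ H].
  specialize (H (x :: nil) (y :: nil) (fun _ => (1, 0))).
  assert (Hn : forall z : Z, NoDup (z :: nil)) by
    (intros; constructor; [simpl; tauto | constructor]).
  specialize (H (Hn x) (Hn y)). simpl in H.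
  destruct (m x y). unfold Cnorm2, Cadd, Cmul, C0 in *; simpl in *. nra.
Qed.

Lemma near d g : inM d (kg g) -> exists L, forall x, d (inl x) (inr (g x)) < L.
Proof.
  intros [_ H]. destruct (H (1/2)) as [s [_ [[L HL] Hs]]]. lra.
  exists L. intros x. destruct (Rlt_le_dec (d (inl x) (inr (g x))) L) as [l|l]; auto.
  exfalso. apply HL in l. pose proof (entry_bound _ _ x (g x) Hs) as E.
  unfold ksub, kg in E. rewrite l in E. destruct (Z.eq_dec (g x) (g x)); [|congruence].
  unfold Cnorm2, Cadd, Copp, C0 in E; simpl in E. lra.
Qed.

Lemma key d : inD d -> inM d (kg (fun x => x)) -> inM d (kg (fun x => (- x)%Z)) -> False.
Proof.
  intros [[_ [_ [Hsym Htri]]] [_ Hr]] H1 H2.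
  destruct (near _ _ H1) as [L1 HL1]. destruct (near _ _ H2) as [L2 HL2].
  destruct (archimed (Rabs (L1 + L2))) as [Hup _].
  set (x := up (Rabs (L1 + L2))) in *.
  pose proof (Htri (inr x) (inl x) (inr (- x)%Z)) as T.
  rewrite Hr, (Hsym (inr x)) in T. specialize (HL1 x). specialize (HL2 x).
  rewrite minus_IZR, opp_IZR in T.
  pose proof (Rle_abs (L1 + L2)).
  pose proof (Rabs_pos (L1 + L2)). cbv beta in HL1, HL2.
  rewrite Rabs_right in T by lra. lra.
Qed.

Lemma inj_id : forall a b : Z, (fun x => x) a = (fun x => x) b -> a = b.
Proof. auto. Qed.
Lemma inj_opp : forall a b : Z, (fun x => (- x)%Z) a = (fun x => (- x)%Z) b -> a = b.
Proof. intros a b H; cbv beta in H; lia. Qed.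

Lemma Rinf_le E e : E e -> (forall r, E r -> e <= r) -> Rinf E <= e.
Proof.
  intros He Hl. unfold Rinf. destruct (excluded_middle_informative _) as [h|n].
  - destruct (constructive_indefinite_description _ h) as [m Hm]; simpl. apply (proj1 Hm); auto.
  - exfalso. apply n. exists e. split; auto.
Qed.

Lemma df_le f Cf x y : f x = y -> df_cross f Cf x y <= Cf / 2.
Proof.
  intros Hf. unfold df_cross. apply Rinf_le.
  - exists x. rewrite Hf, !Z.sub_diag, Rabs_R0. ring.
  - intros r [t ->]. pose proof (Rabs_pos (IZR (x - t))).
    pose proof (Rabs_pos (IZR (f t - y))). lra.
Qed.

Definition dd (s : Z -> Z -> Z) (p q : ZZ) : R :=
  match p, q with
  | inl a, inl b => Rabs (IZR (a - b))
  | inr a, inr b => Rabs (IZR (a - b))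
  | inl a, inr b => Rabs (IZR (s a b)) + 1
  | inr b, inl a => Rabs (IZR (s a b)) + 1
  end.

Ltac rabs := unfold Rabs; repeat destruct Rcase_abs; lra.

Lemma dd_inD1 : inD (dd Z.sub).
Proof.
  split; [|split; intros; reflexivity].
  split; [|split; [|split]].
  - intros [a|a] [b|b]; simpl; pose proof (Rabs_pos (IZR (a - b))); pose proof (Rabs_pos (IZR (b - a))); lra.
  - intros [a|a] [b|b]; simpl; split; intros H.
    + rewrite minus_IZR in H. f_equal. apply eq_IZR. revert H; rabs.
    + inversion H; subst. rewrite Z.sub_diag, Rabs_R0; auto.
    + pose proof (Rabs_pos (IZR (a - b))); lra.
    + discriminate.
    + pose proof (Rabs_pos (IZR (b - a))); lra.
    + discriminate.
    + rewrite minus_IZR in H. f_equal. apply eq_IZR. revert H; rabs.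
    + inversion H; subst. rewrite Z.sub_diag, Rabs_R0; auto.
  - intros [a|a] [b|b]; simpl; rewrite ?minus_IZR; try reflexivity; rabs.
  - intros [a|a] [b|b] [c|c]; simpl; rewrite ?minus_IZR; rabs.
Qed.

Lemma dd_inD2 : inD (dd Z.add).
Proof.
  split; [|split; intros; reflexivity].
  split; [|split; [|split]].
  - intros [a|a] [b|b]; simpl; pose proof (Rabs_pos (IZR (a - b))); pose proof (Rabs_pos (IZR (b + a))); pose proof (Rabs_pos (IZR (a + b))); lra.
  - intros [a|a] [b|b]; simpl; split; intros H.
    + rewrite minus_IZR in H. f_equal. apply eq_IZR. revert H; rabs.
    + inversion H; subst. rewrite Z.sub_diag, Rabs_R0; auto.
    + pose proof (Rabs_pos (IZR (a + b))); lra.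
    + discriminate.
    + pose proof (Rabs_pos (IZR (b + a))); lra.
    + discriminate.
    + rewrite minus_IZR in H. f_equal. apply eq_IZR. revert H; rabs.
    + inversion H; subst. rewrite Z.sub_diag, Rabs_R0; auto.
  - intros [a|a] [b|b]; simpl; rewrite ?minus_IZR; try reflexivity; rabs.
  - intros [a|a] [b|b] [c|c]; simpl; rewrite ?minus_IZR, ?plus_IZR; rabs.
Qed.

Theorem mainTheorem18 (C1 C2 : R) :
  almost_isometry f1 C1 -> almost_isometry f2 C2 ->
  (~ exists d, inD d /\ preceq (d_f f1 C1) d /\ preceq (d_f f2 C2) d) /\
  (~ forall d1 d2, inD d1 -> inD d2 ->
       exists d, inD d /\ preceq d1 d /\ preceq d2 d).
Proof.
  intros _ _. split.
  - intros [d [HD [P1 P2]]]. apply (key d HD).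
    + apply P1. apply (inM_kg _ _ (C1 / 2) inj_id).
      intros x. simpl. apply df_le. reflexivity.
    + apply P2. apply (inM_kg _ _ (C2 / 2) inj_opp).
      intros x. simpl. apply df_le. reflexivity.
  - intros H. destruct (H _ _ dd_inD1 dd_inD2) as [d [HD [P1 P2]]].
    apply (key d HD).
    + apply P1. apply (inM_kg _ _ 1 inj_id).
      intros x. simpl. rewrite Z.sub_diag, Rabs_R0. lra.
    + apply P2. apply (inM_kg _ _ 1 inj_opp).
      intros x. simpl. rewrite Z.add_opp_diag_r, Rabs_R0. lra.
Qed.
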